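(* For the system $$u_{0,0}-v_{1,1}=0,\qquad (u_{1,0}-u_{0,0})(v_{1,0}-u_{0,0})-(u_{0,1}-u_{0,0})(v_{0,1}-u_{0,0})=0,$$ each of the following is a symmetry: $$\frac{\partial u_{0,0}}{\partial t_1}=\frac{u_{0,0}-v_{1,0}}{u_{-1,0}-v_{1,0}},\qquad \frac{\partial v_{0,0}}{\partial t_1}=\frac{u_{-1,0}-v_{0,0}}{u_{-1,0}-v_{1,0}},$$ and $$\frac{\partial u_{0,0}}{\partial s_1}=(u_{1,0}-u_{0,0})(v_{1,0}-u_{0,0}),\qquad \frac{\partial v_{0,0}}{\partial s_1}=(u_{-1,0}-v_{0,0})(v_{-1,0}-v_{0,0}).$$
   Context: Unknowns $u,v$ on $\mathbb Z^2$, $u_{i,j}=u(n+i,m+j)$, similarly $v$. Shifts $\mathcal S:n\mapsto n+1$, $\mathcal T:m\mapsto m+1$. For a quad system $\boldsymbol Q(\boldsymbol u_{0,0},\boldsymbol u_{1,0},\boldsymbol u_{0,1},\boldsymbol u_{1,1})=\boldsymbol 0$ with $\boldsymbol u=(u,v)$ and Jacobians $\mathrm Q_{(p,q)}=\partial\boldsymbol Q/\partial\boldsymbol u_{p,q}$, a vector function $\boldsymbol F(n,m,[\boldsymbol u])=(F^{(1)},F^{(2)})$ is a symmetry, written $\partial_t u_{0,0}=F^{(1)}$, $\partial_t v_{0,0}=F^{(2)}$, if $\mathrm Q_{(0,0)}\boldsymbol F+\mathrm Q_{(1,0)}\mathcal S(\boldsymbol F)+\mathrm Q_{(0,1)}\mathcal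 T(\boldsymbol F)+\mathrm Q_{(1,1)}\mathcal S\mathcal T(\boldsymbol F)=\boldsymbol 0$ holds on all solutions of the system (where $\mathcal S^p\mathcal T^q(\boldsymbol F)$ is $\boldsymbol F$ with all shifts of $\boldsymbol u$ shifted by $(p,q)$). *)

(* Defs.v *)
From HB Require Import structures.
From mathcomp Require Import all_boot all_order all_algebra.
Set Implicit Arguments. Unset Strict Implicit. Unset Printing Implicit Defensive.
Import Order.TTheory GRing.Theory Num.Theory.
Local Open Scope ring_scope.

Definition Q1 (R : comRingType) (u00 u10 u01 u11 v00 v10 v01 v11 : R) : R :=
  u00 - v11.
Definition Q2 (R : comRingType) (u00 u10 u01 u11 v00 v10 v01 v11 : R) : R :=
  (u10 - u00) * (v10 - u00) - (u01 - u00) * (v01 - u00).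

(* Derivative of a polynomial map Q at the point x in the direction y
   (= sum_j dQ/dx_j (x) * y_j): coefficient of eps in Q(x + eps y). *)
Definition lin8
  (Q : forall R : comRingType, R -> R -> R -> R -> R -> R -> R -> R -> R)
  (K : comRingType) (x1 x2 x3 x4 x5 x6 x7 x8 y1 y2 y3 y4 y5 y6 y7 y8 : K) : K :=
  (Q {poly K} (x1%:P + y1 *: 'X) (x2%:P + y2 *: 'X) (x3%:P + y3 *: 'X)
              (x4%:P + y4 *: 'X) (x5%:P + y5 *: 'X) (x6%:P + y6 *: 'X)
              (x7%:P + y7 *: 'X) (x8%:P + y8 *: 'X))`_1.

Definition field2 (K : Type) := int -> int -> K.

Definition is_solution (K : comRingType) (u v : field2 K) : Prop :=
  forall n m : int,
    Q1 (u n m) (u (n+1) m) (u n (m+1)) (u (n+1) (m+1))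
       (v n m) (v (n+1) m) (v n (m+1)) (v (n+1) (m+1)) = 0 /\
    Q2 (u n m) (u (n+1) m) (u n (m+1)) (u (n+1) (m+1))
       (v n m) (v (n+1) m) (v n (m+1)) (v (n+1) (m+1)) = 0.

(* A flow: given (u,v) (and the point (n,m)), the value of F at (n,m);
   shifts S^p T^q (F) are obtained by evaluating at (n+p, m+q). *)
Definition flow (K : Type) := field2 K -> field2 K -> int -> int -> K.

(* Linearized system Q_(0,0) F + Q_(1,0) S F + Q_(0,1) T F + Q_(1,1) ST F = 0
   holds at every point of every solution (u,v) satisfying the admissibility
   condition Adm (used to exclude vanishing denominators of F). *)
Definition is_symmetry (K : comRingType) (Adm : field2 K -> field2 K -> Prop)
  (F1 F2 : flow K) : Prop :=
  forall u v : field2 K, is_solution u v -> Adm u v ->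
  forall n m : int,
    let f1 p q := F1 u v (n+p) (m+q) in
    let f2 p q := F2 u v (n+p) (m+q) in
    lin8 Q1 (u n m) (u (n+1) m) (u n (m+1)) (u (n+1) (m+1))
            (v n m) (v (n+1) m) (v n (m+1)) (v (n+1) (m+1))
            (f1 0 0) (f1 1 0) (f1 0 1) (f1 1 1)
            (f2 0 0) (f2 1 0) (f2 0 1) (f2 1 1) = 0 /\
    lin8 Q2 (u n m) (u (n+1) m) (u n (m+1)) (u (n+1) (m+1))
            (v n m) (v (n+1) m) (v n (m+1)) (v (n+1) (m+1))
            (f1 0 0) (f1 1 0) (f1 0 1) (f1 1 1)
            (f2 0 0) (f2 1 0) (f2 0 1) (f2 1 1) = 0.

Definition Ft1_u (K : fieldType) : flow K := fun u v n m =>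
  (u n m - v (n+1) m) / (u (n-1) m - v (n+1) m).
Definition Ft1_v (K : fieldType) : flow K := fun u v n m =>
  (u (n-1) m - v n m) / (u (n-1) m - v (n+1) m).
Definition Ft1_adm (K : fieldType) (u v : field2 K) : Prop :=
  forall n m : int, u (n-1) m - v (n+1) m != 0.

Definition Fs1_u (K : comRingType) : flow K := fun u v n m =>
  (u (n+1) m - u n m) * (v (n+1) m - u n m).
Definition Fs1_v (K : comRingType) : flow K := fun u v n m =>
  (u (n-1) m - v n m) * (v (n-1) m - v n m).
Definition no_condition (K : Type) (u v : field2 K) : Prop := True.

(* Main.v *)
Require Import Defs.
From HB Require Import structures.
From mathcomp Require Import all_boot all_order all_algebra ring.
Import GRing.Theory.
Local Open Scope ring_scope.

Lemma c1 (K : comRingType) (a b c d : K) :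
  ((a%:P + b *: 'X) * (c%:P + d *: 'X))`_1 = a * d + b * c.
Proof.
rewrite coefM big_ord_recr big_ord_recr big_ord0 /=.
rewrite !coefD !coefC !coefZ !coefX /=. ring.
Qed.

Lemma lin8_Q1 (K : comRingType) (x1 x2 x3 x4 x5 x6 x7 x8 y1 y2 y3 y4 y5 y6 y7 y8 : K) :
  lin8 Q1 x1 x2 x3 x4 x5 x6 x7 x8 y1 y2 y3 y4 y5 y6 y7 y8 = y1 - y8.
Proof.
rewrite /lin8 /Q1 !coefB !coefD !coefC !coefZ !coefX /=. ring.
Qed.

Lemma lin8_Q2 (K : comRingType) (x1 x2 x3 x4 x5 x6 x7 x8 y1 y2 y3 y4 y5 y6 y7 y8 : K) :
  lin8 Q2 x1 x2 x3 x4 x5 x6 x7 x8 y1 y2 y3 y4 y5 y6 y7 y8 =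
  (y2-y1)*(x6-x1) + (x2-x1)*(y6-y1) - ((y3-y1)*(x7-x1) + (x3-x1)*(y7-y1)).
Proof.
rewrite /lin8 /Q2.
have E : forall a b c d : K, (a%:P + b *: 'X) - (c%:P + d *: 'X) = (a - c)%:P + (b - d) *: 'X.
  by move=> a b c d; rewrite polyCB scalerBl; ring.
rewrite !E coefB !c1. ring.
Qed.

Theorem mainTheorem8 (K : numFieldType) :
  is_symmetry (@Ft1_adm K) (@Ft1_u K) (@Ft1_v K) /\
  is_symmetry (@no_condition K) (@Fs1_u K) (@Fs1_v K).
Proof.
split.
- move=> u v sol adm n m /=.
rewrite lin8_Q1 lin8_Q2 /Ft1_u /Ft1_v !addr0 !addrK.
have a1 := adm n m. have a2 := adm (n+1) m. have a3 := adm n (m+1). have a4 := adm (n+1) (m+1).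
have s1 := (sol n m).1. have s2 := (sol n (m-1)).1. have s3 := (sol (n+1) (m-1)).1.
have s4 := (sol (n-1) m).1. have s5 := (sol (n+1) m).1.
have [_ R] := sol n m.
rewrite /Q1 !subrK in s1 s2 s3 s4 s5. rewrite addrK in a2 a4.
move/eqP: s1; rewrite subr_eq0 => /eqP s1.
move/eqP: s2; rewrite subr_eq0 => /eqP s2.
move/eqP: s3; rewrite subr_eq0 => /eqP s3.
move/eqP: s4; rewrite subr_eq0 => /eqP s4.
move/eqP: s5; rewrite subr_eq0 => /eqP s5.
rewrite -!s1 -!s2 -!s3 -!s4 -!s5 in a1 a2 a3 a4 R *.
rewrite /Q2 in R.
set X := (_ - _ * _) in R.
split.
- transitivity (X / ((u (n - 1) m - u n (m - 1)) * (u n (m + 1) - u (n + 1) m))); last by rewrite R mul0r.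
  rewrite /X; field; rewrite ?a1 ?a4 //.
- transitivity (X / (u (n - 1) m - u n (m - 1))); last by rewrite R mul0r.
  rewrite /X; field; rewrite ?a1 ?a2 ?a3 //.

- move=> u v sol _ n m /=.
rewrite lin8_Q1 lin8_Q2 /Fs1_u /Fs1_v !addr0 !addrK.
have s1 := (sol n m).1. have s2 := (sol n (m-1)).1. have s3 := (sol (n+1) (m-1)).1.
have s4 := (sol (n-1) m).1. have s5 := (sol (n+1) m).1.
have s6 := (sol (n-1) (m-1)).1. have s7 := (sol (n-1-1) m).1.
have [_ R] := sol n m. have [_ R1] := sol (n+1) m. have [_ R2] := sol (n-1) m.
rewrite /Q1 !subrK in s1 s2 s3 s4 s5 s6 s7.
move/eqP: s1; rewrite subr_eq0 => /eqP s1.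
move/eqP: s2; rewrite subr_eq0 => /eqP s2.
move/eqP: s3; rewrite subr_eq0 => /eqP s3.
move/eqP: s4; rewrite subr_eq0 => /eqP s4.
move/eqP: s5; rewrite subr_eq0 => /eqP s5.
move/eqP: s6; rewrite subr_eq0 => /eqP s6.
move/eqP: s7; rewrite subr_eq0 => /eqP s7.
rewrite /Q2 !subrK in R R1 R2.
rewrite -?s1 -?s2 -?s3 -?s4 -?s5 -?s6 -?s7 in R R1 R2 *.
set X := (_ - _ * _) in R. set X1 := (_ - _ * _) in R1. set X2 := (_ - _ * _) in R2.
split; first by [].
transitivity ((u n (m - 1) - u n m) * X1 + (u n (m + 1) - u n m) * X2
  + X * ((u n (m + 1) - u n m) + (u (n - 1) m - u n m) - (u (n + 1) (m + 1) - u n m) - (u (n - 1) (m - 1) - u n m))).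
  rewrite /X /X1 /X2; ring.
by rewrite R R1 R2; ring.
Qed.
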